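(* Let $A\in\mathbb R^{m\times n}$ with $A\ge\mathbf 0$, $b\in\mathbb R^m$, $c\in\mathbb R^n$, and suppose the linear program $(P)$: $\max c^\intercal x$ s.t. $Ax\le b$, $x\ge\mathbf 0$ is feasible. Then $(P)$ is unbounded if and only if there exists $j^*\in[n]$ such that $c_{j^*}>0$ and the $j^*$-th column of $A$ is the zero vector.
   Context: Inequalities are componentwise. $(P)$ is unbounded if its objective is unbounded above on its feasible set. *)

(* Defs.v *)
From mathcomp Require Import all_boot all_order all_algebra.
From mathcomp Require Import reals.
Set Implicit Arguments. Unset Strict Implicit. Unset Printing Implicit Defensive.
Import Order.TTheory GRing.Theory Num.Theory.
Local Open Scope ring_scope.

Definition cvle (R : realType) (k : nat) (u v : 'cV[R]_k) : Prop :=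
  forall i : 'I_k, u i 0 <= v i 0.

Definition lp_feasible (R : realType) (m n : nat)
  (A : 'M[R]_(m, n)) (b : 'cV[R]_m) (x : 'cV[R]_n) : Prop :=
  cvle (A *m x) b /\ cvle 0 x.

Definition lp_obj (R : realType) (n : nat) (c : 'cV[R]_n) (x : 'cV[R]_n) : R :=
  (c^T *m x) 0 0.

Definition lp_unbounded (R : realType) (m n : nat)
  (A : 'M[R]_(m, n)) (b : 'cV[R]_m) (c : 'cV[R]_n) : Prop :=
  forall M : R, exists x, lp_feasible A b x /\ M < lp_obj c x.

(* Main.v *)
Require Import Defs.
From mathcomp Require Import all_boot all_order all_algebra.
From mathcomp Require Import reals.
From mathcomp Require Import lra boolp.
Import Order.TTheory GRing.Theory Num.Theory.
Local Open Scope ring_scope.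

Theorem proposition3 (R : realType) (m n : nat)
  (A : 'M[R]_(m, n)) (b : 'cV[R]_m) (c : 'cV[R]_n)
  (hA : forall (i : 'I_m) (j : 'I_n), 0 <= A i j)
  (hfeas : exists x : 'cV[R]_n, lp_feasible A b x) :
  lp_unbounded A b c <->
  exists j : 'I_n, 0 < c j 0 /\ col j A = 0.
Proof.
have objE : forall x : 'cV[R]_n, lp_obj c x = \sum_j c j 0 * x j 0.
  by move=> x; rewrite /lp_obj mxE; apply: eq_bigr => j _; rewrite mxE.
split; last first.
  move=> [j [cj colj]] M.
  case: hfeas => x0 [hAx hx].
  pose t := (`|M| + `|lp_obj c x0| + 1) / c j 0.
  have t0 : 0 <= t.
    rewrite /t divr_ge0 //; last exact: ltW.
    by rewrite addr_ge0 // addr_ge0.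
  exists (x0 + t *: delta_mx j 0); split; first split.
  - move=> i; rewrite mulmxDr -scalemxAr -colE colj scaler0 addr0; exact: hAx.
  - move=> i; rewrite !mxE; apply: addr_ge0; first by have := hx i; rewrite mxE.
    by apply: mulr_ge0 => //; case: eqP.
  - rewrite /lp_obj mulmxDr -scalemxAr -colE.
    rewrite [X in _ < X]mxE [X in _ < _ + X]mxE [X in _ < _ + _ * X]mxE [X in _ < _ + _ * X]mxE.
    have -> : t * c j 0 = `|M| + `|lp_obj c x0| + 1.
      by rewrite /t mulrVK // unitfE gt_eqF.
    rewrite /lp_obj.
    have h1 := ler_norm M.
    have : - (c^T *m x0) 0 0 <= `|(c^T *m x0) 0 0| by rewrite -normrN ler_norm.
    move=> h3; lra.
move=> unb; apply/not_existsP => /= hno.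
pose K j := \sum_i (if 0 < A i j then `|b i 0| / A i j else 0).
pose Mb := \sum_j (if 0 < c j 0 then c j 0 * K j else 0).
have [x [[hAx hx] hlt]] := unb Mb.
move: hlt; apply/negP; rewrite -leNgt objE /Mb.
apply: ler_sum => j _.
have xj0 : 0 <= x j 0 by have := hx j; rewrite mxE.
case: ifP => cpos; last first.
  by rewrite mulr_le0_ge0 // leNgt cpos.
rewrite ler_pM2l //.
have [i Aij] : exists i, 0 < A i j.
  apply/not_existsP => /= hall; apply: (hno j); split => //.
  apply/matrixP => i k; rewrite !mxE.
  by apply/eqP; rewrite eq_le hA andbT leNgt; apply/negP; apply: hall.
have h1 : A i j * x j 0 <= b i 0.
  apply: le_trans (hAx i); rewrite mxE (bigD1 j) //= lerDl.
  by apply: sumr_ge0 => k _; apply: mulr_ge0 => //; have := hx k; rewrite mxE.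
apply: (@le_trans _ _ (`|b i 0| / A i j)).
  rewrite ler_pdivlMr // mulrC; apply: le_trans h1 _; exact: ler_norm.
rewrite /K (bigD1 i) //= Aij lerDl.
by apply: sumr_ge0 => k _; case: ifP => // hk; rewrite divr_ge0 // ltW.
Qed.
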